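(* Let $H$ be either the English board $H_E$ or the French board $H_F$ (defined in the context). Let $b\subseteq H$ be a board position which is solvable and which is invariant under the $180^\circ$ rotation $(x,y)\mapsto(-x,-y)$. Equivalently, $b$ has one of the symmetry types 1–5: square symmetry, $90^\circ$ rotational symmetry, symmetry under both diagonal reflections, symmetry under both orthogonal reflections, or $180^\circ$ rotational symmetry. Then $b$ lies in position class A. Moreover, $b$ is solvable to the centre: there is a sequence of jumps from $b$ ending at the position consisting of the single peg at $(0,0)$.
   Context: Holes are points of $\mathbb{Z}^2$. - The English (33-hole) board is $H_E=\{(x,y)\in\mathbb{Z}^2: |x|\le 3,\ |y|\le 3,\ \min(|x|,|y|)\le 1\}$. - The French (37-hole) board is $H_F=H_E\cup\{(\pm2,\pm2)\}$. - A board position is a subset $b\subseteq H$, namely the set of holes occupied by pegs. - A jump: given $d\in\{(\pm1,0),(0,\pm1)\}$ and $p$ with $p,p+d,p+2d\in H$, $p,p+d\in b$ and $p+2d\notin b$, the jump replaces $b$ by $(b\setminus\{p,p+d\})\cup\{p+2d\}$. - A position is solvable if some finite sequence of jumps leads from it to a position with exactly one peg. Symmetry types. The symmetries of the board are the elements of the dihedral group of the square acting on $\mathbb{Z}^2$ about $(0,0)$. ''Orthogonal reflections'' are $(x,y)\mapsto(-x,y)$ and $(x,y)\mapsto(x,-y)$. ''Diagonal reflections'' are $(x,y)\mapsto(y,x)$ and $(x,y)\mapsto(-y,-x)$. Position class A. For a position $b$ and $i\in\{0,1,2\}$, let $N_i=|\{(x,y)\in b: x+y\equiv i \pmod 3\}|$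 and $M_i=|\{(x,y)\in b: x-y\equiv i\pmod 3\}|$. The position $b$ lies in position class A if all of the following hold: - $N_1+N_2$ is even and $N_0+N_2$ and $N_0+N_1$ are odd; - $M_1+M_2$ is even and $M_0+M_2$ and $M_0+M_1$ are odd. This is the position class of the single peg at $(0,0)$. *)

(* Defs.v *)
From Stdlib Require Import ZArith List Relations.
Import ListNotations.
Open Scope bool_scope.
Open Scope Z_scope.

Definition point := (Z * Z)%type.

(* A board (set of holes) and a position (set of occupied holes) are
   boolean predicates on Z^2. *)
Definition board := point -> bool.
Definition position := point -> bool.

Definition H_E : board := fun p =>
  let (x, y) := p in
  (Z.abs x <=? 3) && (Z.abs y <=? 3) && (Z.min (Z.abs x) (Z.abs y) <=? 1).

Definition H_F : board := fun p =>
  let (x, y) := p in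
  H_E (x, y) || ((Z.abs x =? 2) && (Z.abs y =? 2)).

Definition is_dir (d : point) : Prop :=
  d = (1, 0) \/ d = (-1, 0) \/ d = (0, 1) \/ d = (0, -1).

Definition padd (p q : point) : point := (fst p + fst q, snd p + snd q).
Definition pscale (k : Z) (p : point) : point := (k * fst p, k * snd p).

Definition jump (H : board) (b b' : position) : Prop :=
  exists (p d : point),
    is_dir d /\
    H p = true /\ H (padd p d) = true /\ H (padd p (pscale 2 d)) = true /\
    b p = true /\ b (padd p d) = true /\ b (padd p (pscale 2 d)) = false /\
    forall q : point,
      b' q = (if orb (andb (fst q =? fst p) (snd q =? snd p))
                     (andb (fst q =? fst (padd p d)) (snd q =? snd (padd p d)))
              then false
              else if andb (fst q =? fst (padd p (pscale 2 d)))
                           (snd q =? snd (padd p (pscale 2 d)))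
              then true
              else b q).

Definition reaches (H : board) : position -> position -> Prop :=
  clos_refl_trans position (jump H).

Definition single_peg_at (b : position) (p : point) : Prop :=
  forall q : point, b q = true <-> q = p.

Definition solvable (H : board) (b : position) : Prop :=
  exists b', reaches H b b' /\ exists p, single_peg_at b' p.

(* All points of the 7x7 square [-3,3]^2 (both boards lie inside it). *)
Definition square7 : list point :=
  flat_map (fun x => map (fun y => (x, y)) [-3; -2; -1; 0; 1; 2; 3])
           [-3; -2; -1; 0; 1; 2; 3].

(* N_i and M_i (counts of pegs in b, for b a subset of [-3,3]^2). *)
Definition Ncount (b : position) (i : Z) : nat :=
  length (filter (fun p => b p && (Z.modulo (fst p + snd p) 3 =? i)) square7).
Definition Mcount (b : position) (i : Z) : nat :=
  length (filter (fun p => b p && (Z.modulo (fst p - snd p) 3 =? i)) square7).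

Definition classA (b : position) : Prop :=
  Nat.even (Ncount b 1 + Ncount b 2) = true /\
  Nat.odd (Ncount b 0 + Ncount b 2) = true /\
  Nat.odd (Ncount b 0 + Ncount b 1) = true /\
  Nat.even (Mcount b 1 + Mcount b 2) = true /\
  Nat.odd (Mcount b 0 + Mcount b 2) = true /\
  Nat.odd (Mcount b 0 + Mcount b 1) = true.

(* Main.v *)
Require Import Defs.
From Stdlib Require Import ZArith List Relations.
From Stdlib Require Import Lia Bool.
Import ListNotations.
Open Scope Z_scope.

Definition peqb (x p : point) : bool := andb (fst x =? fst p) (snd x =? snd p).

Lemma peqb_spec x p : peqb x p = true <-> x = p.
Proof.
  destruct x as [a c], p as [e f]; unfold peqb; simpl.
  rewrite andb_true_iff, !Z.eqb_eq. split; [intros [-> ->]; auto | intros H; inversion H; auto].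
Qed.

Lemma peqb_false x p : peqb x p = false <-> x <> p.
Proof. rewrite <- peqb_spec. destruct (peqb x p); split; congruence. Qed.

Definition resN (p : point) := Z.modulo (fst p + snd p) 3.
Definition resM (p : point) := Z.modulo (fst p - snd p) 3.

Definition oN b i := Nat.odd (Ncount b i).
Definition oM b i := Nat.odd (Mcount b i).
Definition keyv (b : position) :=
  (xorb (oN b 0) (oN b 1), xorb (oN b 0) (oN b 2),
   xorb (oM b 0) (oM b 1), xorb (oM b 0) (oM b 2)).

Lemma odd_S n : Nat.odd (S n) = negb (Nat.odd n).
Proof. rewrite Nat.odd_succ, <- Nat.negb_odd. reflexivity. Qed.

Lemma cnt_xor (g g' : point -> bool) l :
  Nat.odd (length (filter g' l)) =
  xorb (Nat.odd (length (filter g l)))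
       (Nat.odd (length (filter (fun x => xorb (g x) (g' x)) l))).
Proof.
  induction l as [|a l IH]; simpl; auto.
  destruct (g a), (g' a); simpl; rewrite ?odd_S, IH;
    destruct (Nat.odd (length (filter g l))), (Nat.odd (length (filter (fun x => xorb (g x) (g' x)) l))); reflexivity.
Qed.

Lemma HE_HF q : H_E q = true -> H_F q = true.
Proof. destruct q as [x y]; unfold H_F; intros ->; reflexivity. Qed.

Lemma HF_in q : H_F q = true -> In q square7.
Proof.
  destruct q as [x y]; unfold H_F, H_E.
  rewrite orb_true_iff, !andb_true_iff, !Z.leb_le, !Z.eqb_eq.
  intros Hq.
  assert (Hx : x = -3 \/ x = -2 \/ x = -1 \/ x = 0 \/ x = 1 \/ x = 2 \/ x = 3) by lia.
  assert (Hy : y = -3 \/ y = -2 \/ y = -1 \/ y = 0 \/ y = 1 \/ y = 2 \/ y = 3) by lia.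
  clear Hq.
  destruct Hx as [->|[->|[->|[->|[->|[->| ->]]]]]];
  destruct Hy as [->|[->|[->|[->|[->|[->| ->]]]]]]; simpl; tauto.
Qed.

Definition dirs : list point := [(1,0);(-1,0);(0,1);(0,-1)].

Lemma dir_in d : is_dir d -> In d dirs.
Proof. unfold is_dir, dirs; intros [->|[->|[->| ->]]]; simpl; auto. Qed.

Definition trip_ok (p0 d : point) : bool :=
  let p1 := padd p0 d in let p2 := padd p0 (pscale 2 d) in
  forallb (fun i =>
    Nat.odd (length (filter (fun x => (peqb x p0 || peqb x p1 || peqb x p2) && (resN x =? i)) square7)) &&
    Nat.odd (length (filter (fun x => (peqb x p0 || peqb x p1 || peqb x p2) && (resM x =? i)) square7)))
  [0;1;2].

Lemma trip_check : forallb (fun p0 => forallb (fun d =>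
   negb (H_F p0 && H_F (padd p0 d) && H_F (padd p0 (pscale 2 d))) || trip_ok p0 d) dirs) square7 = true.
Proof. vm_compute. reflexivity. Qed.

Lemma H_HF (H : board) : (H = H_E \/ H = H_F) -> forall q, H q = true -> H_F q = true.
Proof. intros [-> | ->] q; auto using HE_HF. Qed.

Lemma xor_and a a' c : xorb (a && c) (a' && c) = xorb a a' && c.
Proof. destruct a, a', c; reflexivity. Qed.

Lemma jump_key H b b' : (H = H_E \/ H = H_F) -> jump H b b' ->
  keyv b' = keyv b /\ ((forall q, b q = true -> H q = true) -> forall q, b' q = true -> H q = true).
Proof.
  intros HH [p0 [d [Hd [H0 [H1 [H2 [B0 [B1 [B2 F]]]]]]]]].
  set (p1 := padd p0 d) in *. set (p2 := padd p0 (pscale 2 d)) in *.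
  assert (X : forall x, xorb (b x) (b' x) = peqb x p0 || peqb x p1 || peqb x p2).
  { intro x. rewrite F. fold (peqb x p0) (peqb x p1) (peqb x p2).
    destruct (peqb x p0) eqn:E0; [apply peqb_spec in E0; subst; rewrite B0; reflexivity|].
    destruct (peqb x p1) eqn:E1; [apply peqb_spec in E1; subst; rewrite B1; reflexivity|].
    destruct (peqb x p2) eqn:E2; [apply peqb_spec in E2; subst; rewrite B2; reflexivity|].
    simpl. destruct (b x); reflexivity. }
  assert (T : trip_ok p0 d = true).
  { pose proof trip_check as C. rewrite forallb_forall in C.
    specialize (C p0 (HF_in _ (H_HF _ HH _ H0))). rewrite forallb_forall in C.
    specialize (C d (dir_in _ Hd)). fold p1 p2 in C.
    rewrite (H_HF _ HH _ H0), (H_HF _ HH _ H1), (H_HF _ HH _ H2) in C. exact C. }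
  unfold trip_ok in T. rewrite forallb_forall in T. fold p1 p2 in T.
  assert (KN : forall i, In i [0;1;2] -> oN b' i = negb (oN b i)).
  { intros i Hi. specialize (T i Hi). apply andb_true_iff in T as [T _].
    unfold oN, Ncount.
    rewrite (cnt_xor (fun p => b p && (((fst p + snd p) mod 3) =? i))).
    rewrite (filter_ext (fun x => xorb (b x && (((fst x + snd x) mod 3) =? i)) (b' x && (((fst x + snd x) mod 3) =? i)))
      (fun x => (peqb x p0 || peqb x p1 || peqb x p2) && (resN x =? i))).
    2:{ intro x. rewrite xor_and, X. reflexivity. }
    rewrite T. destruct (Nat.odd _); reflexivity. }
  assert (KM : forall i, In i [0;1;2] -> oM b' i = negb (oM b i)).
  { intros i Hi. specialize (T i Hi). apply andb_true_iff in T as [_ T].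
    unfold oM, Mcount.
    rewrite (cnt_xor (fun p => b p && (((fst p - snd p) mod 3) =? i))).
    rewrite (filter_ext (fun x => xorb (b x && (((fst x - snd x) mod 3) =? i)) (b' x && (((fst x - snd x) mod 3) =? i)))
      (fun x => (peqb x p0 || peqb x p1 || peqb x p2) && (resM x =? i))).
    2:{ intro x. rewrite xor_and, X. reflexivity. }
    rewrite T. destruct (Nat.odd _); reflexivity. }
  split.
  - unfold keyv.
    rewrite (KN 0), (KN 1), (KN 2), (KM 0), (KM 1), (KM 2) by (simpl; tauto).
    destruct (oN b 0), (oN b 1), (oN b 2), (oM b 0), (oM b 1), (oM b 2); reflexivity.
  - intros Sub q Hq. specialize (X q). rewrite Hq in X.
    destruct (b q) eqn:Bq; [auto|]. simpl in X.
    apply eq_sym, orb_true_iff in X as [X|X]; [apply orb_true_iff in X as [X|X]|];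
      apply peqb_spec in X; subst; auto.
Qed.

Lemma reaches_key H b c : (H = H_E \/ H = H_F) -> reaches H b c ->
  keyv c = keyv b /\ ((forall q, b q = true -> H q = true) -> forall q, c q = true -> H q = true).
Proof.
  intros HH R. induction R as [x y J|x|x y z _ IH1 _ IH2].
  - apply jump_key; auto.
  - auto.
  - destruct IH1 as [A1 B1], IH2 as [A2 B2]. split; [congruence|auto].
Qed.

Definition pneg (p : point) : point := (- fst p, - snd p).

Lemma sq_neg : map pneg square7 = rev square7.
Proof. vm_compute. reflexivity. Qed.

Lemma len_filter_map (f : point -> point) g l :
  length (filter g (map f l)) = length (filter (fun x => g (f x)) l).
Proof. induction l; simpl; auto. destruct (g (f a)); simpl; auto. Qed.

Lemma len_filter_rev (g : point -> bool) l : length (filter g (rev l)) = length (filter g l).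
Proof.
  induction l; simpl; auto. rewrite filter_app, length_app, IHl. simpl.
  destruct (g a); simpl; lia.
Qed.

Lemma mod_neg (z : Z) : (- z mod 3 =? 1) = (z mod 3 =? 2).
Proof.
  pose proof (Z.div_mod z 3 ltac:(lia)) as A1. pose proof (Z.mod_pos_bound z 3 ltac:(lia)) as A2.
  pose proof (Z.div_mod (-z) 3 ltac:(lia)) as A3. pose proof (Z.mod_pos_bound (-z) 3 ltac:(lia)) as A4.
  remember (z mod 3) as r. remember (-z mod 3) as r'. remember (z/3) as q. remember (-z/3) as q'.
  clear Heqr Heqr' Heqq Heqq'.
  destruct (Z.eqb_spec r' 1); destruct (Z.eqb_spec r 2); auto; exfalso; lia.
Qed.

Lemma sym_N b : (forall x y, b (-x, -y) = b (x, y)) -> Ncount b 1 = Ncount b 2.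
Proof.
  intros S. unfold Ncount.
  transitivity (length (filter (fun p => b p && ((fst p + snd p) mod 3 =? 1)) (map pneg square7))).
  { rewrite sq_neg, len_filter_rev. reflexivity. }
  rewrite len_filter_map.
  rewrite (filter_ext (fun x => b (pneg x) && ((fst (pneg x) + snd (pneg x)) mod 3 =? 1))
     (fun p => b p && ((fst p + snd p) mod 3 =? 2))). reflexivity.
  intros [x y]. unfold pneg; simpl. rewrite S.
  replace (-x + -y) with (-(x + y)) by lia. rewrite mod_neg. reflexivity.
Qed.

Lemma sym_M b : (forall x y, b (-x, -y) = b (x, y)) -> Mcount b 1 = Mcount b 2.
Proof.
  intros S. unfold Mcount.
  transitivity (length (filter (fun p => b p && ((fst p - snd p) mod 3 =? 1)) (map pneg square7))).
  { rewrite sq_neg, len_filter_rev. reflexivity. }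
  rewrite len_filter_map.
  rewrite (filter_ext (fun x => b (pneg x) && ((fst (pneg x) - snd (pneg x)) mod 3 =? 1))
     (fun p => b p && ((fst p - snd p) mod 3 =? 2))). reflexivity.
  intros [x y]. unfold pneg; simpl. rewrite S.
  replace (-x - -y) with (-(x - y)) by lia. rewrite mod_neg. reflexivity.
Qed.

Definition axis4 : list point := [(3,0);(-3,0);(0,3);(0,-3)].
Definition sgl (p : point) : position := fun q => peqb q p.

Definition final_ok (p : point) : bool :=
  negb (H_F p) ||
  (let '(k1,k2,k3,k4) := keyv (sgl p) in
   negb (Bool.eqb k1 k2 && Bool.eqb k3 k4) ||
   (k1 && k2 && k3 && k4 && (peqb p (0,0) || existsb (peqb p) axis4))).

Lemma final_check : forallb final_ok square7 = true.
Proof. vm_compute. reflexivity. Qed.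

Definition reroute_ok (p0 d : point) : bool :=
  negb (H_F p0 && H_F (padd p0 d) && existsb (peqb (padd p0 (pscale 2 d))) axis4) || peqb p0 d.

Lemma reroute_check : forallb (fun p0 => forallb (reroute_ok p0) dirs) square7 = true.
Proof. vm_compute. reflexivity. Qed.

Lemma keyv_ext b c : (forall q, b q = c q) -> keyv b = keyv c.
Proof.
  intros E. unfold keyv, oN, oM, Ncount, Mcount.
  repeat rewrite (filter_ext (fun p => b p && _) (fun p => c p && _)) by (intro; rewrite E; reflexivity).
  reflexivity.
Qed.

Lemma dir_nz d : is_dir d -> fst d <> 0 \/ snd d <> 0.
Proof. unfold is_dir; intros [->|[->|[->| ->]]]; simpl; lia. Qed.

Theorem theorem1 :
  forall (H : board), (H = H_E \/ H = H_F) ->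
  forall (b : position),
    (forall q, b q = true -> H q = true) ->
    solvable H b ->
    (forall x y : Z, b (-x, -y) = b (x, y)) ->
    classA b /\
    exists b', reaches H b b' /\ single_peg_at b' (0, 0).
Proof.
  intros H HH b Sub [bf [R [p Sg]]] S.
  destruct (reaches_key _ _ _ HH R) as [K Subf].
  specialize (Subf Sub).
  assert (Hp : H_F p = true) by (apply (H_HF _ HH), Subf, Sg; reflexivity).
  assert (Ksg : keyv bf = keyv (sgl p)).
  { apply keyv_ext. intro q. unfold sgl. apply eq_true_iff_eq. rewrite peqb_spec. apply Sg. }
  assert (Fo : final_ok p = true).
  { pose proof final_check as C. rewrite forallb_forall in C. apply C, HF_in, Hp. }
  unfold final_ok in Fo. rewrite Hp, <- Ksg, K in Fo.
  pose proof (sym_N b S) as SN. pose proof (sym_M b S) as SM.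
  unfold keyv, oN, oM in Fo. rewrite SN, SM in Fo.
  rewrite !eqb_reflx in Fo. cbv beta iota zeta delta [negb orb andb] in Fo.
  assert (X : xorb (Nat.odd (Ncount b 0)) (Nat.odd (Ncount b 2)) = true /\
              xorb (Nat.odd (Mcount b 0)) (Nat.odd (Mcount b 2)) = true /\
              (peqb p (0,0) || existsb (peqb p) axis4) = true).
  { revert Fo. generalize (Nat.odd (Ncount b 0)), (Nat.odd (Ncount b 2)),
      (Nat.odd (Mcount b 0)), (Nat.odd (Mcount b 2)), (peqb p (0,0)), (existsb (peqb p) axis4).
    intros [] [] [] [] [] []; simpl; intro E; try discriminate E; repeat split; auto. }
  clear Fo. destruct X as [X1 [X2 Fo]].
  split.
  { unfold classA. rewrite SN, SM. rewrite !Nat.even_add, !Nat.odd_add, <- !Nat.negb_odd.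
    revert X1 X2. generalize (Nat.odd (Ncount b 0)), (Nat.odd (Ncount b 2)),
      (Nat.odd (Mcount b 0)), (Nat.odd (Mcount b 2)).
    intros [] [] [] []; simpl; intros E1 E2; try discriminate E1; try discriminate E2; repeat split; auto. }
  all: clear K Ksg SN SM X1 X2.
  apply orb_true_iff in Fo as [Fo|Fo];
    [ apply peqb_spec in Fo; subst p; exists bf; split; auto | ].
  apply clos_rt_rtn1 in R; inversion R as [E|b'' y J R' E]; subst.
  1: exfalso; pose proof (proj2 (Sg p) eq_refl) as Bp; destruct p as [x z];
       rewrite <- S in Bp; apply Sg in Bp;
       simpl in Fo; unfold peqb in Fo; simpl in Fo;
       rewrite !orb_true_iff, !andb_true_iff, !Z.eqb_eq in Fo; inversion Bp; lia.
  all: destruct J as [p0 [d [Hd [H0 [H1 [H2 [B0 [B1 [B2 F]]]]]]]]].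
  all: set (p1 := padd p0 d) in *; set (p2 := padd p0 (pscale 2 d)) in *.
  all: assert (D20 : peqb p2 p0 = false) by
        (apply peqb_false; subst p2; pose proof (dir_nz _ Hd) as DZ; destruct p0, d; unfold padd, pscale in *; cbn [fst snd] in *;
         intro E; pose proof (f_equal fst E) as E1; pose proof (f_equal snd E) as E2; cbn [fst snd] in E1, E2; lia).
  all: assert (D21 : peqb p2 p1 = false) by
        (apply peqb_false; subst p2 p1; pose proof (dir_nz _ Hd) as DZ; destruct p0, d; unfold padd, pscale in *; cbn [fst snd] in *;
         intro E; pose proof (f_equal fst E) as E1; pose proof (f_equal snd E) as E2; cbn [fst snd] in E1, E2; lia).
  all: assert (P2 : p2 = p) by (apply Sg; rewrite F; fold (peqb p2 p0) (peqb p2 p1) (peqb p2 p2);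
          rewrite D20, D21; cbn [orb]; replace (peqb p2 p2) with true by (symmetry; apply peqb_spec; reflexivity); reflexivity).
  all: assert (Bc : forall q, b'' q = peqb q p0 || peqb q p1).
  all: try (intro q;
      destruct (peqb q p0) eqn:E0; [apply peqb_spec in E0; subst q; exact B0|];
      destruct (peqb q p1) eqn:E1; [apply peqb_spec in E1; subst q; exact B1|];
      destruct (peqb q p2) eqn:E2; [apply peqb_spec in E2; subst q; exact B2|];
      simpl; pose proof (F q) as Fq; fold (peqb q p0) (peqb q p1) (peqb q p2) in Fq;
      rewrite E0, E1, E2 in Fq; simpl in Fq; rewrite <- Fq;
      destruct (bf q) eqn:Bf; [apply Sg in Bf; apply peqb_false in E2; congruence | reflexivity]).
  all: assert (P0 : p0 = d).
  all: try (pose proof reroute_check as C; rewrite forallb_forall in C;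
      specialize (C p0 (HF_in _ (H_HF _ HH _ H0))); rewrite forallb_forall in C;
      specialize (C d (dir_in _ Hd)); unfold reroute_ok in C;
      fold p1 p2 in C; rewrite (H_HF _ HH _ H0), (H_HF _ HH _ H1) in C; rewrite P2, Fo in C;
      simpl in C; apply peqb_spec in C; exact C).
  all: subst p1 p2; subst p0; clear F B0 B1 B2 D20 D21 P2.
  all: destruct Hd as [->|[->|[->| ->]]]; cbn in *.
  all: unfold padd, pscale in H0, H1, H2, Bc; simpl in H0, H1, H2, Bc.
  all: let tac p' d' :=
         (exists (fun q => if orb (andb (fst q =? fst p') (snd q =? snd p'))
                     (andb (fst q =? fst (padd p' d')) (snd q =? snd (padd p' d')))
              then false
              else if andb (fst q =? fst (padd p' (pscale 2 d')))
                           (snd q =? snd (padd p' (pscale 2 d')))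
              then true
              else b'' q);
          split;
          [ apply rt_trans with b''; [apply clos_rtn1_rt; exact R' |];
            apply rt_step; exists p', d';
            split; [unfold is_dir; tauto|];
            split; [first [exact H0 | exact H1 | exact H2] |];
            split; [first [exact H0 | exact H1 | exact H2] |];
            split; [destruct HH; subst H; reflexivity |];
            split; [rewrite Bc; reflexivity |];
            split; [rewrite Bc; reflexivity |];
            split; [rewrite Bc; reflexivity |];
            intro; reflexivity
          | intros [x z]; cbn [fst snd padd pscale]; rewrite Bc; unfold peqb; cbn [fst snd];
            destruct (Z.eqb_spec x 0), (Z.eqb_spec z 0), (Z.eqb_spec x 1), (Z.eqb_spec z 1),
              (Z.eqb_spec x 2), (Z.eqb_spec z 2), (Z.eqb_spec x (-1)), (Z.eqb_spec z (-1)),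
              (Z.eqb_spec x (-2)), (Z.eqb_spec z (-2)); subst; simpl;
            split; intro E; try discriminate; try reflexivity; try (inversion E; lia);
            repeat match goal with E : context [?a =? ?b] |- _ => destruct (Z.eqb_spec a b) end;
            try discriminate; try congruence; lia ])
       in
       first [ tac (2,0) (-1,0) | tac (-2,0) (1,0) | tac (0,2) (0,-1) | tac (0,-2) (0,1) ].
Qed.
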